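(* Let $G=G_+G_-$ be a unique factorization of a finite group $G$ and let $\xi,\eta:G_+\to G_-$ be group homomorphisms. Put $G_+'=\{u\xi(u^{-1}):u\in G_+\}$, $G_+''=\{\eta(u^{-1})u:u\in G_+\}$ and $F:G_+'\to G_+''$, $F(u\xi(u^{-1}))=\eta(u)u^{-1}$. Then the conjunction of the conditions (a) $G_+'$ and $G_+''$ are normal subgroups of $G$, and (b) $F$ is a group isomorphism, is equivalent to the following identities holding for all $u,v\in G_+$ and $x\in G_-$: \begin{align*} &(1)\ \xi(u)^v=\xi(u^{\eta(v)}),\qquad (2)\ {}^u\eta(v)=\eta({}^{\xi(u)}v),\qquad (3)\ uv=({}^{\xi(u)}v)(u^{\eta(v)}),\\ &(4)\ \xi({}^x u)\,x^u=x\,\xi(u),\qquad (5)\ \eta({}^x u)\,x^u=x\,\eta(u). \end{align*} Moreover, for each $i\in\{1,\dots,5\}$, identity $(i)$ (for all $u,v\in G_+$, $x\in G_-$) is equivalent to identity $(i')$ (for all $u,v\in G_+$, $x\in G_-$), where \begin{align*} &(1')\ {}^v\xi(u)=\xi({}^{\eta(v)}u),\qquad (2')\ \eta(v)^u=\eta(v^{\xi(u)}),\qquad (3')\ uv=({}^{\eta(u)}v)(u^{\xi(v)}),\\ &(4')\ {}^u x\,\xi(u^x)=\xi(u)\,x,\qquad (5')\ {}^u x\,\eta(u^x)=\eta(u)\,x. \end{align*}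
   Context: A unique factorization $G=G_+G_-$ consists of subgroups $G_+,G_-$ of $G$ such that every $g\in G$ can be written uniquely as $g=g_+g_-$ with $g_+\in G_+$, $g_-\in G_-$. For $u\in G_+$ and $x\in G_-$ define ${}^u x\in G_-$, $u^x\in G_+$, ${}^x u\in G_+$, $x^u\in G_-$ by $ux=({}^u x)(u^x)$ and $xu=({}^x u)(x^u)$ (unique factorizations in $G=G_-G_+$ and $G=G_+G_-$ respectively). *)

(* Defs.v *)
From mathcomp Require Import all_boot all_fingroup.
Set Implicit Arguments. Unset Strict Implicit. Unset Printing Implicit Defensive.
Local Open Scope group_scope.

Definition unique_factorization (gT : finGroupType) (G A B : {group gT}) : Prop :=
  A \subset G /\ B \subset G /\
  forall g, g \in G -> exists! p : gT * gT, [/\ p.1 \in A, p.2 \in B & g = p.1 * p.2].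

(* The (chosen) factorization g = a b with a in A, b in B (unique when G = AB
   is a unique factorization; default (1,1) otherwise). *)
Definition fact (gT : finGroupType) (A B : {set gT}) (g : gT) : gT * gT :=
  odflt (1, 1) [pick p : gT * gT | (p.1 \in A) && (p.2 \in B) && (g == p.1 * p.2)].

Section Actions.
Variables (gT : finGroupType) (Gp Gm : {set gT}).
(* For u in G_+, x in G_- :  u x = (^u x)(u^x)  in G = G_- G_+ *)
Definition lactP (u x : gT) : gT := (fact Gm Gp (u * x)).1.
Definition ractP (u x : gT) : gT := (fact Gm Gp (u * x)).2.
(* x u = (^x u)(x^u)  in G = G_+ G_- *)
Definition lactM (x u : gT) : gT := (fact Gp Gm (x * u)).1.
Definition ractM (x u : gT) : gT := (fact Gp Gm (x * u)).2.
End Actions.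

Definition Gp1 (gT : finGroupType) (Gp : {set gT}) (xi : gT -> gT) : {set gT} :=
  [set u * xi u^-1 | u in Gp].
Definition Gp2 (gT : finGroupType) (Gp : {set gT}) (eta : gT -> gT) : {set gT} :=
  [set eta u^-1 * u | u in Gp].

Definition Fmap (gT : finGroupType) (Gp : {set gT}) (xi eta : gT -> gT) (g : gT) : gT :=
  let u := odflt 1 [pick u in Gp | g == u * xi u^-1] in eta u * u^-1.

Section Identities.
Variables (gT : finGroupType) (Gp Gm : {set gT}) (xi eta : gT -> gT).

Definition ident1 := forall u v, u \in Gp -> v \in Gp ->
  ractM Gp Gm (xi u) v = xi (ractP Gp Gm u (eta v)).
Definition ident2 := forall u v, u \in Gp -> v \in Gp ->
  lactP Gp Gm u (eta v) = eta (lactM Gp Gm (xi u) v).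
Definition ident3 := forall u v, u \in Gp -> v \in Gp ->
  u * v = lactM Gp Gm (xi u) v * ractP Gp Gm u (eta v).
Definition ident4 := forall u x, u \in Gp -> x \in Gm ->
  xi (lactM Gp Gm x u) * ractM Gp Gm x u = x * xi u.
Definition ident5 := forall u x, u \in Gp -> x \in Gm ->
  eta (lactM Gp Gm x u) * ractM Gp Gm x u = x * eta u.

Definition ident1' := forall u v, u \in Gp -> v \in Gp ->
  lactP Gp Gm v (xi u) = xi (lactM Gp Gm (eta v) u).
Definition ident2' := forall u v, u \in Gp -> v \in Gp ->
  ractM Gp Gm (eta v) u = eta (ractP Gp Gm v (xi u)).
Definition ident3' := forall u v, u \in Gp -> v \in Gp ->
  u * v = lactM Gp Gm (eta u) v * ractP Gp Gm u (xi v).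
Definition ident4' := forall u x, u \in Gp -> x \in Gm ->
  lactP Gp Gm u x * xi (ractP Gp Gm u x) = xi u * x.
Definition ident5' := forall u x, u \in Gp -> x \in Gm ->
  lactP Gp Gm u x * eta (ractP Gp Gm u x) = eta u * x.
End Identities.

(* Main.v *)
Require Import Defs.
From mathcomp Require Import all_boot all_fingroup.
Local Open Scope group_scope.

Section Fact.
Variables (gT : finGroupType) (G P M : {group gT}).
Hypotheses (sPG : P \subset G) (sMG : M \subset G).
Hypothesis TI : forall g, g \in P -> g \in M -> g = 1.
Hypothesis hex : forall g, g \in G -> exists p, exists m, [/\ p \in P, m \in M & g = p * m].

Lemma inG_P p : p \in P -> p \in G. Proof. exact: (subsetP sPG). Qed.
Lemma inG_M p : p \in M -> p \in G. Proof. exact: (subsetP sMG). Qed.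

Lemma uniqPM p1 m1 p2 m2 : p1 \in P -> m1 \in M -> p2 \in P -> m2 \in M ->
  p1 * m1 = p2 * m2 -> p1 = p2 /\ m1 = m2.
Proof.
move=> P1 M1 P2 M2 E.
have h : p2^-1 * p1 = m2 * m1^-1.
  by rewrite -[p1](mulgK m1) E !mulgA mulVg mul1g.
have h1 : p2^-1 * p1 = 1 by apply: TI; [rewrite groupM ?groupV | rewrite h groupM ?groupV].
have ep : p1 = p2 by apply/eqP; rewrite eq_sym eq_mulVg1 h1.
split=> //; move: E; rewrite ep; exact: mulgI.
Qed.

Lemma uniqMP p1 m1 p2 m2 : p1 \in P -> m1 \in M -> p2 \in P -> m2 \in M ->
  m1 * p1 = m2 * p2 -> p1 = p2 /\ m1 = m2.
Proof.
move=> P1 M1 P2 M2 E.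
have E' : p1^-1 * m1^-1 = p2^-1 * m2^-1 by rewrite -!invMg E.
have [a b] := uniqPM _ _ _ _ (groupVr P1) (groupVr M1) (groupVr P2) (groupVr M2) E'.
by split; apply: invg_inj.
Qed.

Lemma hexMP g : g \in G -> exists m, exists p, [/\ p \in P, m \in M & g = m * p].
Proof.
move=> Gg; have [p [m [Pp Mm E]]] := hex _ (groupVr Gg).
exists m^-1, p^-1; split; rewrite ?groupV //.
by rewrite -invMg -E invgK.
Qed.

Lemma fact_spec (A B : {set gT}) g :
  (exists a, exists b, [/\ a \in A, b \in B & g = a * b]) ->
  [/\ (fact A B g).1 \in A, (fact A B g).2 \in B & g = (fact A B g).1 * (fact A B g).2].
Proof.
move=> [a [b [Aa Bb E]]]; rewrite /fact; case: pickP => [[p q] /= /andP[/andP[Ap Bq] /eqP ->] | none] //.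
by have := none (a, b); rewrite /= Aa Bb E eqxx.
Qed.

Lemma actM_spec x u : x \in M -> u \in P ->
  [/\ lactM P M x u \in P, ractM P M x u \in M & x * u = lactM P M x u * ractM P M x u].
Proof.
move=> Mx Pu; apply: fact_spec; apply: hex; apply: groupM; [exact: inG_M | exact: inG_P].
Qed.

Lemma actP_spec u x : u \in P -> x \in M ->
  [/\ lactP P M u x \in M, ractP P M u x \in P & u * x = lactP P M u x * ractP P M u x].
Proof.
move=> Pu Mx; apply: fact_spec.
have [m [p [Pp Mm E]]] := hexMP _ (groupM (inG_P _ Pu) (inG_M _ Mx)).
by exists m, p.
Qed.

Lemma actM_uniq x u p m : x \in M -> u \in P -> p \in P -> m \in M -> x * u = p * m ->
  lactM P M x u = p /\ ractM P M x u = m.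
Proof.
move=> Mx Pu Pp Mm E; have [h1 h2 h3] := actM_spec _ _ Mx Pu.
by apply: uniqPM => //; rewrite -h3.
Qed.

Lemma actP_uniq u x m p : u \in P -> x \in M -> m \in M -> p \in P -> u * x = m * p ->
  lactP P M u x = m /\ ractP P M u x = p.
Proof.
move=> Pu Mx Mm Pp E; have [h1 h2 h3] := actP_spec _ _ Pu Mx.
have [a b] := uniqMP _ _ _ _ h2 h1 Pp Mm (etrans (esym h3) E).
by [].
Qed.


Lemma invA x u : x \in M -> u \in P ->
  lactP P M u^-1 x^-1 = (ractM P M x u)^-1 /\ ractP P M u^-1 x^-1 = (lactM P M x u)^-1.
Proof.
move=> Mx Pu; have [h1 h2 h3] := actM_spec _ _ Mx Pu.
apply: actP_uniq; rewrite ?groupV //.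
by rewrite -invMg h3 invMg.
Qed.

Lemma invB x u : x \in M -> u \in P ->
  lactM P M x^-1 u^-1 = (ractP P M u x)^-1 /\ ractM P M x^-1 u^-1 = (lactP P M u x)^-1.
Proof.
move=> Mx Pu; have [h1 h2 h3] := actP_spec _ _ Pu Mx.
apply: actM_uniq; rewrite ?groupV //.
by rewrite -invMg h3 invMg.
Qed.

Lemma PM1 u m : u \in P -> m \in M -> u * m = 1 -> u = 1.
Proof.
move=> Pu Mm E; apply: TI => //.
have -> : u = m^-1 by rewrite -[u](mulgK m) E mul1g.
by rewrite groupV.
Qed.

Section Zeta.
Variable z : {morphism P >-> gT}.
Hypothesis zM : z @* P \subset M.

Lemma zin u : u \in P -> z u \in M.
Proof. by move=> Pu; apply: (subsetP zM); apply: mem_morphim. Qed.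

Lemma zinV u : u \in P -> z u^-1 \in M.
Proof. by move=> Pu; apply: zin; rewrite groupV. Qed.

Lemma conj4 (h4 : ident4 P M z) x u : x \in M -> u \in P ->
  x * (u * z u^-1) * x^-1 = lactM P M x u * z (lactM P M x u)^-1.
Proof.
move=> Mx Pu; have [Pp Mm E] := actM_spec _ _ Mx Pu.
have h := h4 u x Pu Mx.
set p := lactM P M x u in Pp E h *; set m := ractM P M x u in Mm E h *.
have hm : m = (z p)^-1 * (x * z u) by rewrite -h mulKg.
rewrite !morphV // !mulgA E hm.
by rewrite !mulgA mulgK mulgK.
Qed.

Lemma prod4 (h4 : ident4 P M z) u v : u \in P -> v \in P ->
  (u * z u^-1) * (v * z v^-1) =
  (u * lactM P M (z u)^-1 v) * z (u * lactM P M (z u)^-1 v)^-1.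
Proof.
move=> Pu Pv; have Mx : (z u)^-1 \in M by rewrite groupV zin.
have [Pp Mm E] := actM_spec _ _ Mx Pv.
have h := h4 v _ Pv Mx.
set p := lactM P M (z u)^-1 v in Pp E h *; set m := ractM P M (z u)^-1 v in Mm E h *.
have hm : m = (z p)^-1 * ((z u)^-1 * z v) by rewrite -h mulKg.
rewrite !morphV ?groupM // morphM // invMg.
rewrite !mulgA -(mulgA u) E hm.
by rewrite !mulgA mulgK.
Qed.

Lemma gs4 (h4 : ident4 P M z) : group_set (Gp1 P z).
Proof.
apply/group_setP; split.
  by apply/imsetP; exists 1; rewrite ?group1 // invg1 morph1 mulg1.
move=> _ _ /imsetP[u Pu ->] /imsetP[v Pv ->].
rewrite prod4 //; apply/imsetP; eexists; last reflexivity.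
have Mx : (z u)^-1 \in M by rewrite groupV zin.
by have [hh _ _] := actM_spec _ _ Mx Pv; rewrite groupM.
Qed.

Lemma conjM4 (h4 : ident4 P M z) y k : y \in M -> k \in Gp1 P z -> k ^ y \in Gp1 P z.
Proof.
move=> My /imsetP[u Pu ->]; rewrite conjgE mulgA.
have := conj4 h4 _ _ (groupVr My) Pu; rewrite invgK => ->.
have [hh _ _] := actM_spec _ _ (groupVr My) Pu.
by apply/imsetP; eexists; last reflexivity.
Qed.

Lemma norm4 (h4 : ident4 P M z) : Gp1 P z <| G.
Proof.
apply/andP; split.
  apply/subsetP => _ /imsetP[u Pu ->].
  by apply: groupM; [apply: inG_P | apply: inG_M; apply: zinV].
apply/subsetP => g Gg; rewrite inE; apply/subsetP => _ /imsetP[k Kk ->].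
have [p [m [Pp Mm ->]]] := hex _ Gg.
have -> : p * m = (p * z p^-1) * (z p * m).
  by rewrite morphV // !mulgA mulgVK.
rewrite conjgM; apply: (conjM4 h4); first by rewrite groupM ?zin.
pose KG := Group (gs4 h4).
have : k ^ (p * z p^-1) \in KG.
  apply: groupJ; first exact: Kk.
  by apply/imsetP; exists p.
by [].
Qed.

Lemma from_norm (nK : Gp1 P z <| G) : ident4 P M z.
Proof.
move=> u x Pu Mx; case/andP: nK => sKG nKG.
have Nx : x^-1 \in 'N(Gp1 P z) by apply: (subsetP nKG); rewrite groupV inG_M.
have hK : (u * z u^-1) ^ x^-1 \in Gp1 P z.
  by rewrite memJ_norm //; apply/imsetP; exists u.
rewrite conjgE invgK in hK; case/imsetP: hK => w Pw E.
have [Pp Mm E'] := actM_spec _ _ Mx Pu.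
set p := lactM P M x u in Pp E' *; set m := ractM P M x u in Mm E' *.
rewrite !mulgA E' -!mulgA in E.
have [e1 e2] := uniqPM _ _ _ _ Pp (groupM Mm (groupM (zinV _ Pu) (groupVr Mx))) Pw (zinV _ Pw) E.
rewrite -e1 !morphV // in e2 *.
rewrite -(mulgK ((z u)^-1 * x^-1) m) e2 mulKVg invMg !invgK.
by [].
Qed.

Lemma Gp2_inv y : (y \in Gp2 P z) = (y^-1 \in Gp1 P z).
Proof.
apply/imsetP/imsetP => [[u Pu ->] | [w Pw E]].
  exists u^-1; rewrite ?groupV // invMg invgK.
  by rewrite morphV ?groupV // invgK.
exists w^-1; rewrite ?groupV //.
by rewrite invgK -[y]invgK E invMg morphV ?groupV // invgK.
Qed.

Lemma Gp2_eq1 : group_set (Gp1 P z) -> Gp2 P z = Gp1 P z.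
Proof.
move=> gs; pose KG := Group gs; apply/setP => y.
rewrite Gp2_inv; exact: (groupV KG y).
Qed.

Lemma Gp2_eq2 : group_set (Gp2 P z) -> Gp2 P z = Gp1 P z.
Proof.
move=> gs; pose KG := Group gs; apply/setP => y.
rewrite -[y in RHS]invgK -Gp2_inv; exact: (esym (groupV KG y)).
Qed.

End Zeta.

Lemma e4gen (z : {morphism P >-> gT}) (zM : z @* P \subset M) :
  ident4 P M z <-> ident4' P M z.
Proof.
split=> h u x Pu Mx.
  have := h u^-1 x^-1 (groupVr Pu) (groupVr Mx).
  have [a1 a2] := invB _ _ Mx Pu; rewrite a1 a2 !morphV //; last first.
    by have [_ hh _] := actP_spec _ _ Pu Mx.
  by rewrite -!invMg => /invg_inj.
have := h u^-1 x^-1 (groupVr Pu) (groupVr Mx).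
have [a1 a2] := invA _ _ Mx Pu; rewrite a1 a2 !morphV //; last first.
  by have [hh _ _] := actM_spec _ _ Mx Pu.
by rewrite -!invMg => /invg_inj.
Qed.

Section XiEta.
Variables xi eta : {morphism P >-> gT}.
Hypotheses (xiM : xi @* P \subset M) (etaM : eta @* P \subset M).

Lemma FmapE u : u \in P -> Fmap P xi eta (u * xi u^-1) = eta u * u^-1.
Proof.
move=> Pu; rewrite /Fmap; case: pickP => [w /andP[Pw /eqP E] | none] /=.
  by have [-> _] := uniqPM _ _ _ _ Pw (zinV xi xiM _ Pw) Pu (zinV xi xiM _ Pu) (esym E).
by have := none u; rewrite Pu eqxx.
Qed.

Let xin u : u \in P -> xi u \in M. Proof. exact: zin xi xiM u. Qed.
Let etan u : u \in P -> eta u \in M. Proof. exact: zin eta etaM u. Qed.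

Lemma e1 : ident1 P M xi eta <-> ident1' P M xi eta.
Proof.
split=> h u v Pu Pv.
  have := h u^-1 v^-1 (groupVr Pu) (groupVr Pv); rewrite !morphV //.
  have [_ a2] := invB _ _ (xin _ Pu) Pv; have [_ b2] := invA _ _ (etan _ Pv) Pu.
  rewrite a2 b2 morphV; first by move/invg_inj.
  by have [hh _ _] := actM_spec _ _ (etan _ Pv) Pu.
have := h u^-1 v^-1 (groupVr Pu) (groupVr Pv); rewrite !morphV //.
have [a1 _] := invA _ _ (xin _ Pu) Pv; have [b1 _] := invB _ _ (etan _ Pv) Pu.
rewrite a1 b1 morphV; first by move/invg_inj.
by have [_ hh _] := actP_spec _ _ Pu (etan _ Pv).
Qed.

Lemma e2 : ident2 P M xi eta <-> ident2' P M xi eta.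
Proof.
split=> h u v Pu Pv.
  have := h u^-1 v^-1 (groupVr Pu) (groupVr Pv); rewrite !morphV //.
  have [a1 _] := invA _ _ (etan _ Pv) Pu; have [b1 _] := invB _ _ (xin _ Pu) Pv.
  rewrite a1 b1 morphV; first by move/invg_inj.
  by have [_ hh _] := actP_spec _ _ Pv (xin _ Pu).
have := h u^-1 v^-1 (groupVr Pu) (groupVr Pv); rewrite !morphV //.
have [_ a2] := invB _ _ (etan _ Pv) Pu; have [_ b2] := invA _ _ (xin _ Pu) Pv.
rewrite a2 b2 morphV; first by move/invg_inj.
by have [hh _ _] := actM_spec _ _ (xin _ Pu) Pv.
Qed.

Lemma e3 : ident3 P M xi eta <-> ident3' P M xi eta.
Proof.
split=> h u v Pu Pv.
  have := h v^-1 u^-1 (groupVr Pv) (groupVr Pu); rewrite !morphV //.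
  have [a1 _] := invB _ _ (xin _ Pv) Pu; have [_ b2] := invA _ _ (etan _ Pu) Pv.
  by rewrite a1 b2 -!invMg => /invg_inj.
have := h v^-1 u^-1 (groupVr Pv) (groupVr Pu); rewrite !morphV //.
have [a1 _] := invB _ _ (etan _ Pv) Pu; have [_ b2] := invA _ _ (xin _ Pu) Pv.
by rewrite a1 b2 -!invMg => /invg_inj.
Qed.

Lemma morph_from (h4 : ident4 P M xi) (h2 : ident2 P M xi eta) (h3 : ident3 P M xi eta) :
  morphic (Gp1 P xi) (Fmap P xi eta).
Proof.
apply/morphicP => _ _ /imsetP[u Pu ->] /imsetP[v Pv ->].
have Mx : (xi u)^-1 \in M by rewrite groupV xin.
have [Pw Mm Ew] := actM_spec _ _ Mx Pv.
rewrite prod4 // !FmapE ?groupM //.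
set w := lactM P M (xi u)^-1 v in Pw Mm Ew *.
have [Mr Pq Er] := actP_spec _ _ (groupVr Pu) (etan _ Pv).
have ee2 := h2 _ _ (groupVr Pu) Pv; have ee3 := h3 _ _ (groupVr Pu) Pv.
rewrite morphV // -/w in ee2 ee3.
rewrite ee2 in Er.
have key : u^-1 * (eta v * v^-1) * u^-1^-1 = eta w * w^-1.
  by rewrite !mulgA Er -!mulgA -invMg ee3 invMg mulKVg.
rewrite invgK in key.
have kv : eta v * v^-1 = u * (eta w * w^-1) * u^-1.
  by rewrite -key !mulgA mulgV mul1g mulgK.
by rewrite morphM // invMg kv !mulgA mulgVK.
Qed.

Lemma morph_key (h4 : ident4 P M xi) (hm : morphic (Gp1 P xi) (Fmap P xi eta)) u v :
  u \in P -> v \in P ->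
  u * (eta v * v^-1) * u^-1 = eta (lactM P M (xi u) v) * (lactM P M (xi u) v)^-1.
Proof.
move=> Pu Pv; move/morphicP: hm => hm.
have K1 : u^-1 * xi u^-1^-1 \in Gp1 P xi by apply/imsetP; exists u^-1; rewrite ?groupV.
have K2 : v * xi v^-1 \in Gp1 P xi by apply/imsetP; exists v.
have E := hm _ _ K1 K2.
have Mx : (xi u) \in M by rewrite xin.
have [Pw Mm Ew] := actM_spec _ _ Mx Pv.
rewrite prod4 ?groupV // !FmapE ?groupV // in E; last first.
  by rewrite groupM ?groupV // morphV // invgK.
rewrite (morphV xi Pu) invgK in E.
set w := lactM P M (xi u) v in Pw Mm Ew E *.
rewrite morphM ?groupV // invMg invgK -!mulgA in E.
move/mulgI: E => E.
by rewrite -E !mulgA mulgK.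
Qed.

Lemma morph_to (h4 : ident4 P M xi) (hm : morphic (Gp1 P xi) (Fmap P xi eta)) u v :
  u \in P -> v \in P ->
  [/\ ractM P M (xi u) v = xi (ractP P M u (eta v)),
      lactP P M u (eta v) = eta (lactM P M (xi u) v) &
      u * v = lactM P M (xi u) v * ractP P M u (eta v)].
Proof.
move=> Pu Pv.
have Mp := morph_key h4 hm _ _ Pu Pv.
have [Pp Mm Ep] := actM_spec _ _ (xin _ Pu) Pv.
have [Mr Pq Er] := actP_spec _ _ Pu (etan _ Pv).
have h := h4 v (xi u) Pv (xin _ Pu).
set p := lactM P M (xi u) v in Pp Ep Mp h *.
set m := ractM P M (xi u) v in Mm Ep h *.
set r := lactP P M u (eta v) in Mr Er *.
set q := ractP P M u (eta v) in Pq Er *.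
have Eq : r * q = eta p * (p^-1 * (u * v)).
  by rewrite -Er mulgA -Mp !mulgA !mulgVK.
have Pq' : p^-1 * (u * v) \in P by rewrite !groupM ?groupV.
have [eq eRr] := uniqMP _ _ _ _ Pq Mr Pq' (etan _ Pp) Eq.
split=> //; last by rewrite eq mulKVg.
rewrite eq morphM ?groupV ?groupM // morphV // morphM //.
by rewrite -h mulKg.
Qed.

Lemma isomF : isom (Gp1 P xi) (Gp2 P eta) (Fmap P xi eta).
Proof.
apply/eqP/setP => y; apply/imsetP/idP.
  move=> [k /setD1P[k1 Kk] ->]; case/imsetP: Kk k1 => u Pu -> k1; rewrite FmapE //.
  apply/setD1P; split.
    apply/eqP => E; move: k1; rewrite (PM1 _ _ Pu (groupVr (etan _ Pu))); last first.
      by rewrite -[u * _]invgK invMg invgK E invg1.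
    by rewrite invg1 morph1 mulg1 eqxx.
  by apply/imsetP; exists u^-1; rewrite ?groupV ?invgK.
move/setD1P => [y1 /imsetP[w Pw Ey]].
exists (w^-1 * xi w^-1^-1); last by rewrite FmapE ?groupV // invgK.
apply/setD1P; split; last by apply/imsetP; exists w^-1; rewrite ?groupV.
apply/eqP => E; move: y1; rewrite Ey.
have w1 : w^-1 = 1 by apply: (PM1 _ _ (groupVr Pw) _ E); rewrite invgK xin.
have w1' : w = 1 by rewrite -[w]invgK w1 invg1.
by rewrite w1' invg1 morph1 mul1g eqxx.
Qed.

Lemma main_sec :
  ((([/\ group_set (Gp1 P xi), Gp1 P xi <| G,
         group_set (Gp2 P eta) & Gp2 P eta <| G]
     /\ misom (Gp1 P xi) (Gp2 P eta) (Fmap P xi eta))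
    <->
    [/\ ident1 P M xi eta, ident2 P M xi eta, ident3 P M xi eta,
        ident4 P M xi & ident5 P M eta])
  /\ [/\ ident1 P M xi eta <-> ident1' P M xi eta,
         ident2 P M xi eta <-> ident2' P M xi eta,
         ident3 P M xi eta <-> ident3' P M xi eta,
         ident4 P M xi <-> ident4' P M xi
       & ident5 P M eta <-> ident5' P M eta]).
Proof.
split; last first.
  split; [exact: e1 | exact: e2 | exact: e3 | exact: e4gen | exact: (e4gen eta etaM)].
split.
  move=> [[gs1 n1 gs2 n2] /andP[hm _]].
  have h4 : ident4 P M xi by apply: from_norm.
  have eq2 : Gp2 P eta = Gp1 P eta by apply: Gp2_eq2.
  have h5 : ident4 P M eta.
    apply: from_norm. all: try exact etaM. rewrite -eq2. exact n2.
  split=> //.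
  - by move=> u v Pu Pv; have [] := morph_to h4 hm _ _ Pu Pv.
  - by move=> u v Pu Pv; have [] := morph_to h4 hm _ _ Pu Pv.
  - by move=> u v Pu Pv; have [] := morph_to h4 hm _ _ Pu Pv.
move=> [h1 h2 h3 h4 h5].
have gs5 : group_set (Gp1 P eta) by apply: gs4.
have eq2 : Gp2 P eta = Gp1 P eta by apply: Gp2_eq1.
split.
  split; [exact: gs4 | exact: norm4 | by rewrite eq2 | by rewrite eq2; apply: norm4].
by apply/andP; split; [exact: morph_from | exact: isomF].
Qed.

End XiEta.
End Fact.

Theorem proposition1 (gT : finGroupType) (G Gp Gm : {group gT})
    (xi eta : {morphism Gp >-> gT}) :
  unique_factorization G Gp Gm ->
  xi @* Gp \subset Gm -> eta @* Gp \subset Gm ->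
  ((([/\ group_set (Gp1 Gp xi), Gp1 Gp xi <| G,
         group_set (Gp2 Gp eta) & Gp2 Gp eta <| G]
     /\ misom (Gp1 Gp xi) (Gp2 Gp eta) (Fmap Gp xi eta))
    <->
    [/\ ident1 Gp Gm xi eta, ident2 Gp Gm xi eta, ident3 Gp Gm xi eta,
        ident4 Gp Gm xi & ident5 Gp Gm eta])
  /\ [/\ ident1 Gp Gm xi eta <-> ident1' Gp Gm xi eta,
         ident2 Gp Gm xi eta <-> ident2' Gp Gm xi eta,
         ident3 Gp Gm xi eta <-> ident3' Gp Gm xi eta,
         ident4 Gp Gm xi <-> ident4' Gp Gm xi
       & ident5 Gp Gm eta <-> ident5' Gp Gm eta]).
Proof.
move=> [sPG [sMG hu]] xiM etaM.
have TI : forall g, g \in Gp -> g \in Gm -> g = 1.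
  move=> g Pg Mg; have [p [_ U]] := hu g (subsetP sPG g Pg).
  have a := U (g, 1) (And3 Pg (group1 Gm) (esym (mulg1 g))).
  have b := U (1, g) (And3 (group1 Gp) Mg (esym (mul1g g))).
  by move: (etrans (esym a) b) => [].

have hex : forall g, g \in G -> exists p, exists m, [/\ p \in Gp, m \in Gm & g = p * m].
  move=> g Gg; have [[p m] [[Pp Mm E] _]] := hu g Gg.
  by exists p, m.
exact: (@main_sec gT G Gp Gm sPG sMG TI hex xi eta xiM etaM).
Qed.
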